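(* Let $P$ be a field and $W=W(X)$ the free commutative, free associative, or free Lie algebra over $P$ on a finite set $X$. Let $u\in W$ be a basic element, i.e. an element belonging to some free generating set (base) of $W$. Then $$\bigcap_{\eta\in\mathrm{End}(W),\ \eta(u)=0}\mathrm{Ker}\,\eta=\langle u\rangle,$$ where $\langle u\rangle$ is the ideal of $W$ generated by $u$.
   Context: $\mathrm{End}(W)$ denotes the set of all algebra endomorphisms of $W$. In the paper's notation this is the statement $\langle u\rangle''=\langle u\rangle$ for the Galois correspondence $T'=\{\eta\in\mathrm{End}(W): T\subset\mathrm{Ker}\,\eta\}$, $A'=\bigcap_{\eta\in A}\mathrm{Ker}\,\eta$. *)

(* Defs.v *)
From HB Require Import structures.
From mathcomp Require Import all_boot all_order all_algebra.
From mathcomp Require Import mpoly.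


Import GRing.Theory.
Local Open Scope ring_scope.

(* Generic framework: an algebra W presented as a subset of an ambient type  *)
(* A carrying explicit operations.                                           *)

Record ualg_sig (P : fieldType) := UAlgSig {
  ua_car   : Type;
  ua_zero  : ua_car;
  ua_one   : ua_car;
  ua_add   : ua_car -> ua_car -> ua_car;
  ua_scale : P -> ua_car -> ua_car;
  ua_mul   : ua_car -> ua_car -> ua_car;
  ua_W     : ua_car -> Prop
}.

Record lie_sig (P : fieldType) := LieSig {
  la_car   : Type;
  la_zero  : la_car;
  la_add   : la_car -> la_car -> la_car;
  la_scale : P -> la_car -> la_car;
  la_br    : la_car -> la_car -> la_car;
  la_W     : la_car -> Prop
}.

Arguments ua_car {P} u.
Arguments la_car {P} l.
Arguments ua_zero {P} u.
Arguments ua_one {P} u.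
Arguments ua_add {P} u _ _.
Arguments ua_scale {P} u _ _.
Arguments ua_mul {P} u _ _.
Arguments ua_W {P} u _.
Arguments la_zero {P} l.
Arguments la_add {P} l _ _.
Arguments la_scale {P} l _ _.
Arguments la_br {P} l _ _.
Arguments la_W {P} l _.

Set Implicit Arguments.
Unset Strict Implicit.
Unset Printing Implicit Defensive.

Section UAlg.
Variables (P : fieldType) (W : ualg_sig P).
Local Notation A := (ua_car W).
Local Notation inW := (ua_W W).

Inductive ua_subalg_gen (S : A -> Prop) : A -> Prop :=
  | uasg_gen a : S a -> ua_subalg_gen S a
  | uasg_zero : ua_subalg_gen S (ua_zero W)
  | uasg_one : ua_subalg_gen S (ua_one W)
  | uasg_add a b : ua_subalg_gen S a -> ua_subalg_gen S b ->
                   ua_subalg_gen S (ua_add W a b)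
  | uasg_scale c a : ua_subalg_gen S a -> ua_subalg_gen S (ua_scale W c a)
  | uasg_mul a b : ua_subalg_gen S a -> ua_subalg_gen S b ->
                   ua_subalg_gen S (ua_mul W a b).

Inductive ua_ideal_gen (u : A) : A -> Prop :=
  | uaig_gen : ua_ideal_gen u u
  | uaig_zero : ua_ideal_gen u (ua_zero W)
  | uaig_add a b : ua_ideal_gen u a -> ua_ideal_gen u b ->
                   ua_ideal_gen u (ua_add W a b)
  | uaig_scale c a : ua_ideal_gen u a -> ua_ideal_gen u (ua_scale W c a)
  | uaig_mull w a : inW w -> ua_ideal_gen u a -> ua_ideal_gen u (ua_mul W w a)
  | uaig_mulr a w : inW w -> ua_ideal_gen u a -> ua_ideal_gen u (ua_mul W a w).

(* algebra endomorphisms of W (only their values on W matter) *)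
Definition ua_endo (eta : A -> A) : Prop :=
  [/\ forall a, inW a -> inW (eta a),
      eta (ua_one W) = ua_one W,
      forall a b, inW a -> inW b -> eta (ua_add W a b) = ua_add W (eta a) (eta b),
      forall c a, inW a -> eta (ua_scale W c a) = ua_scale W c (eta a) &
      forall a b, inW a -> inW b -> eta (ua_mul W a b) = ua_mul W (eta a) (eta b)].

Definition ua_hom_to (B : algType P) (h : A -> B) : Prop :=
  [/\ h (ua_one W) = 1,
      forall a b, inW a -> inW b -> h (ua_add W a b) = h a + h b,
      forall c a, inW a -> h (ua_scale W c a) = c *: h a &
      forall a b, inW a -> inW b -> h (ua_mul W a b) = h a * h b].

Definition ua_base_assoc (S : A -> Prop) : Prop :=
  [/\ forall s, S s -> inW s,
      forall a, inW a <-> ua_subalg_gen S a &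
      forall (B : algType P) (g : A -> B),
        exists h, ua_hom_to h /\ forall s, S s -> h s = g s].

Definition ua_base_comm (S : A -> Prop) : Prop :=
  [/\ forall s, S s -> inW s,
      forall a, inW a <-> ua_subalg_gen S a &
      forall (B : comAlgType P) (g : A -> B),
        exists h, @ua_hom_to B h /\ forall s, S s -> h s = g s].

End UAlg.

Definition is_lie_bracket (P : fieldType) (V : lmodType P) (br : V -> V -> V) :=
  [/\ forall c x y z, br (c *: x + y) z = c *: br x z + br y z,
      forall c x y z, br x (c *: y + z) = c *: br x y + br x z,
      forall x, br x x = 0 &
      forall x y z, br x (br y z) + br y (br z x) + br z (br x y) = 0].

Section Lie.
Variables (P : fieldType) (L : lie_sig P).
Local Notation A := (la_car L).
Local Notation inW := (la_W L).

Inductive la_subalg_gen (S : A -> Prop) : A -> Prop :=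
  | lasg_gen a : S a -> la_subalg_gen S a
  | lasg_zero : la_subalg_gen S (la_zero L)
  | lasg_add a b : la_subalg_gen S a -> la_subalg_gen S b ->
                   la_subalg_gen S (la_add L a b)
  | lasg_scale c a : la_subalg_gen S a -> la_subalg_gen S (la_scale L c a)
  | lasg_br a b : la_subalg_gen S a -> la_subalg_gen S b ->
                  la_subalg_gen S (la_br L a b).

Inductive la_ideal_gen (u : A) : A -> Prop :=
  | laig_gen : la_ideal_gen u u
  | laig_zero : la_ideal_gen u (la_zero L)
  | laig_add a b : la_ideal_gen u a -> la_ideal_gen u b ->
                   la_ideal_gen u (la_add L a b)
  | laig_scale c a : la_ideal_gen u a -> la_ideal_gen u (la_scale L c a)
  | laig_br w a : inW w -> la_ideal_gen u a -> la_ideal_gen u (la_br L w a).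

Definition la_endo (eta : A -> A) : Prop :=
  [/\ forall a, inW a -> inW (eta a),
      forall a b, inW a -> inW b -> eta (la_add L a b) = la_add L (eta a) (eta b),
      forall c a, inW a -> eta (la_scale L c a) = la_scale L c (eta a) &
      forall a b, inW a -> inW b -> eta (la_br L a b) = la_br L (eta a) (eta b)].

Definition la_hom_to (V : lmodType P) (br : V -> V -> V) (h : A -> V) : Prop :=
  [/\ forall a b, inW a -> inW b -> h (la_add L a b) = h a + h b,
      forall c a, inW a -> h (la_scale L c a) = c *: h a &
      forall a b, inW a -> inW b -> h (la_br L a b) = br (h a) (h b)].

Definition la_base (S : A -> Prop) : Prop :=
  [/\ forall s, S s -> inW s,
      forall a, inW a <-> la_subalg_gen S a &
      forall (V : lmodType P) (br : V -> V -> V), is_lie_bracket br ->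
        forall g : A -> V,
        exists h, la_hom_to br h /\ forall s, S s -> h s = g s].

End Lie.

(* free commutative (unital) algebra = polynomial algebra P[x_0..x_{n-1}] *)
Definition free_comm_alg (P : fieldType) (n : nat) : ualg_sig P :=
  @UAlgSig P {mpoly P[n]} 0 1 +%R (fun c p => c *: p) *%R (fun _ => True).

(* Ambient space of noncommutative formal power series: functions from      *)
(* words over 'I_n to P, with the Cauchy (concatenation) product.           *)
Definition ncps (P : fieldType) (n : nat) := seq 'I_n -> P.

Section NCPS.
Variables (P : fieldType) (n : nat).
Definition ncps_zero : ncps P n := fun _ => 0.
Definition ncps_one : ncps P n := fun w => (w == [::])%:R.
Definition ncps_add (f g : ncps P n) : ncps P n := fun w => f w + g w.
Definition ncps_scale (c : P) (f : ncps P n) : ncps P n := fun w => c * f w.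
Definition ncps_mul (f g : ncps P n) : ncps P n :=
  fun w => \sum_(i < (size w).+1) f (take i w) * g (drop i w).
Definition ncps_var (x : 'I_n) : ncps P n := fun w => (w == [:: x])%:R.
Definition ncps_comm (f g : ncps P n) : ncps P n :=
  ncps_add (ncps_mul f g) (ncps_scale (-1) (ncps_mul g f)).
Definition ncps_vars (a : ncps P n) : Prop := exists x, a = ncps_var x.
End NCPS.

(* free associative (unital) algebra P<x_0..x_{n-1}>: the unital subalgebra *)
(* of noncommutative power series generated by the variables                *)
Definition free_assoc_alg (P : fieldType) (n : nat) : ualg_sig P :=
  let S0 := @UAlgSig P (ncps P n) (@ncps_zero P n) (@ncps_one P n)
              (@ncps_add P n) (@ncps_scale P n) (@ncps_mul P n) (fun _ => True) in
  @UAlgSig P (ncps P n) (@ncps_zero P n) (@ncps_one P n)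
     (@ncps_add P n) (@ncps_scale P n) (@ncps_mul P n)
     (@ua_subalg_gen P S0 (@ncps_vars P n)).

(* free Lie algebra on x_0..x_{n-1}: the Lie subalgebra of P<<X>> (bracket  *)
(* = commutator) generated by the variables                                  *)
Definition free_lie_alg (P : fieldType) (n : nat) : lie_sig P :=
  let L0 := @LieSig P (ncps P n) (@ncps_zero P n) (@ncps_add P n)
              (@ncps_scale P n) (@ncps_comm P n) (fun _ => True) in
  @LieSig P (ncps P n) (@ncps_zero P n) (@ncps_add P n)
     (@ncps_scale P n) (@ncps_comm P n)
     (@la_subalg_gen P L0 (@ncps_vars P n)).

(* Main.v *)
Require Import Defs.
From HB Require Import structures.
From mathcomp Require Import all_boot all_order all_algebra.
From mathcomp Require Import mpoly.
From mathcomp Require Import boolp.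
Set Warnings "-all".
Import GRing.Theory.
Local Open Scope ring_scope.
Section S.
Variables (P : fieldType) (n : nat).
Local Notation T := (ncps P n).
Lemma ncps_ext (f g : T) : (forall w, f w = g w) -> f = g.
Proof. move=> h; exact: functional_extensionality_dep. Qed.

Lemma ncps_mulA : associative (@ncps_mul P n).
Proof.
move=> f g h; apply: ncps_ext => w; rewrite /ncps_mul.
set N := size w.
pose F j i := f (take j w) * g (drop j (take i w)) * h (drop i w).
transitivity (\sum_(0 <= j < N.+1) \sum_(0 <= i < N.+1) (if (j <= i)%N then F j i else 0)).
  rewrite big_mkord; apply: eq_bigr => [[j hj]] _ /=.
  have E1 : \sum_(0 <= i < N.+1) (if (j <= i)%N then F j i else 0) =
            \sum_(j <= i < N.+1) F j i.
    rewrite (@big_nat_widenl _ _ _ j 0) // [RHS]big_mkcond /=.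
    by apply: eq_bigr => i _; case: (j <= i)%N.
  have E2 : \sum_(j <= i < N.+1) F j i = \sum_(0 <= k < N.+1 - j) F j (k + j)%N.
    by rewrite -{1}(add0n j) big_addn.
  rewrite E1 E2 subSn // -size_drop.
  rewrite mulr_sumr big_mkord; apply: eq_bigr => [[k hk]] _ /=.
  by rewrite /F mulrA take_drop drop_drop.
transitivity (\sum_(0 <= i < N.+1) \sum_(0 <= j < N.+1) (if (j <= i)%N then F j i else 0)).
  exact: exchange_big_nat.
rewrite big_mkord; apply: eq_bigr => -[i hi] _ /=.
have E1 : \sum_(0 <= j < N.+1) (if (j <= i)%N then F j i else 0) =
            \sum_(0 <= j < i.+1) F j i.
  rewrite (big_nat_widen _ _ _ _ _ (hi : i.+1 <= N.+1)%N) [RHS]big_mkcond /=.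
  by apply: eq_bigr => j _; rewrite ltnS.
rewrite E1 (size_takel (hi : (i <= size w)%N)) mulr_suml big_mkord; apply: eq_bigr => -[j hj] _ /=.
by rewrite /F take_takel.
Qed.

Definition ncps_opp (f : T) : T := fun w => - f w.

Lemma ncps_addA : associative (@ncps_add P n).
Proof. by move=> f g h; apply: ncps_ext => w; rewrite /ncps_add addrA. Qed.
Lemma ncps_addC : commutative (@ncps_add P n).
Proof. by move=> f g; apply: ncps_ext => w; rewrite /ncps_add addrC. Qed.
Lemma ncps_add0 : left_id (@ncps_zero P n) (@ncps_add P n).
Proof. by move=> f; apply: ncps_ext => w; rewrite /ncps_add /ncps_zero add0r. Qed.
Lemma ncps_addN : left_inverse (@ncps_zero P n) ncps_opp (@ncps_add P n).
Proof. by move=> f; apply: ncps_ext => w; rewrite /ncps_add /ncps_zero /ncps_opp addNr. Qed.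

Lemma ncps_mul1 : left_id (@ncps_one P n) (@ncps_mul P n).
Proof.
move=> f; apply: ncps_ext => w; rewrite /ncps_mul /ncps_one.
case: w => [|x w]; first by rewrite big_ord_recl big_ord0 /= mul1r addr0.
rewrite big_ord_recl /= mul1r big1 ?addr0 // => i _.
by rewrite /= mul0r.
Qed.

Lemma ncps_mul1r : right_id (@ncps_one P n) (@ncps_mul P n).
Proof.
move=> f; apply: ncps_ext => w; rewrite /ncps_mul /ncps_one.
rewrite big_ord_recr /= drop_size take_size eqxx mulr1 big1 ?add0r //.
move=> [i hi] _ /=; rewrite -size_eq0 size_drop.
by rewrite subn_eq0 leqNgt hi /= mulr0.
Qed.

Lemma ncps_mulDl : left_distributive (@ncps_mul P n) (@ncps_add P n).
Proof.
move=> f g h; apply: ncps_ext => w; rewrite /ncps_mul /ncps_add -big_split /=.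
by apply: eq_bigr => i _; rewrite mulrDl.
Qed.
Lemma ncps_mulDr : right_distributive (@ncps_mul P n) (@ncps_add P n).
Proof.
move=> f g h; apply: ncps_ext => w; rewrite /ncps_mul /ncps_add -big_split /=.
by apply: eq_bigr => i _; rewrite mulrDr.
Qed.
End S.

HB.instance Definition _ (P : fieldType) (n : nat) := gen_eqMixin (ncps P n).
HB.instance Definition _ (P : fieldType) (n : nat) := gen_choiceMixin (ncps P n).
HB.instance Definition _ (P : fieldType) (n : nat) :=
  GRing.isZmodule.Build (ncps P n) (@ncps_addA P n) (@ncps_addC P n)
    (@ncps_add0 P n) (@ncps_addN P n).

Lemma ncps_one_neq0 (P : fieldType) (n : nat) : (@ncps_one P n) != 0.
Proof.
apply/eqP => h; have := congr1 (fun f : ncps P n => f [::]) h.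
by rewrite /ncps_one /= => /eqP; rewrite oner_eq0.
Qed.

HB.instance Definition _ (P : fieldType) (n : nat) :=
  GRing.Zmodule_isNzRing.Build (ncps P n) (@ncps_mulA P n) (@ncps_mul1 P n)
    (@ncps_mul1r P n) (@ncps_mulDl P n) (@ncps_mulDr P n) (@ncps_one_neq0 P n).

Section S2.
Variables (P : fieldType) (n : nat).
Local Notation T := (ncps P n).
Lemma ncps_scaleA a b (v : T) : ncps_scale a (ncps_scale b v) = ncps_scale (a * b) v.
Proof. by apply: ncps_ext => w; rewrite /ncps_scale mulrA. Qed.
Lemma ncps_scale1 : left_id 1 (@ncps_scale P n).
Proof. by move=> v; apply: ncps_ext => w; rewrite /ncps_scale mul1r. Qed.
Lemma ncps_scaleDr : right_distributive (@ncps_scale P n) +%R.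
Proof. by move=> a u v; apply: ncps_ext => w; rewrite /ncps_scale /= /ncps_add mulrDr. Qed.
Lemma ncps_scaleDl (v : T) : {morph (@ncps_scale P n)^~ v : a b / a + b}.
Proof. by move=> a b; apply: ncps_ext => w; rewrite /ncps_scale /= /ncps_add mulrDl. Qed.
End S2.

HB.instance Definition _ (P : fieldType) (n : nat) :=
  GRing.Zmodule_isLmodule.Build P (ncps P n) (@ncps_scaleA P n) (@ncps_scale1 P n)
    (@ncps_scaleDr P n) (@ncps_scaleDl P n).

Lemma ncps_scaleAl (P : fieldType) (n : nat) (a : P) (u v : ncps P n) :
  a *: (u * v) = (a *: u) * v.
Proof.
change (ncps_scale a (ncps_mul u v) = ncps_mul (ncps_scale a u) v).
apply: ncps_ext => w; rewrite /ncps_scale /ncps_mul mulr_sumr.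
by apply: eq_bigr => i _; rewrite mulrA.
Qed.
HB.instance Definition _ (P : fieldType) (n : nat) :=
  GRing.Lmodule_isLalgebra.Build P (ncps P n) (@ncps_scaleAl P n).
Lemma ncps_scaleAr (P : fieldType) (n : nat) (a : P) (u v : ncps P n) :
  a *: (u * v) = u * (a *: v).
Proof.
change (ncps_scale a (ncps_mul u v) = ncps_mul u (ncps_scale a v)).
apply: ncps_ext => w; rewrite /ncps_scale /ncps_mul mulr_sumr.
by apply: eq_bigr => i _; rewrite mulrCA.
Qed.
HB.instance Definition _ (P : fieldType) (n : nat) :=
  GRing.Lalgebra_isAlgebra.Build P (ncps P n) (@ncps_scaleAr P n).

Section UAgen.
Variables (P : fieldType) (B : algType P) (inW : B -> Prop).
Local Notation W := (@UAlgSig P B 0 1 +%R (fun c p => c *: p) *%R inW).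

Lemma ua_main (S : B -> Prop) (u : B) :
  (forall s, S s -> inW s) -> (forall a, inW a <-> ua_subalg_gen (W:=W) S a) -> S u ->
  (exists h : B -> B, ua_hom_to (W:=W) (B:=B) h /\ h u = 0 /\ forall s, S s -> s <> u -> h s = s) ->
  forall v, (inW v /\ forall eta, ua_endo (W:=W) eta -> eta u = 0 -> eta v = 0)
            <-> ua_ideal_gen (W:=W) u v.
Proof.
move=> SW gen Su [h [[h1 hD hZ hM] [hu hS]]] v.
have W0 : inW 0 by apply/gen; exact: uasg_zero.
have W1 : inW 1 by apply/gen; exact: uasg_one.
have WD a b : inW a -> inW b -> inW (a + b).
  by move=> /gen ha /gen hb; apply/gen; exact: (uasg_add ha hb).
have WZ c a : inW a -> inW (c *: a).
  by move=> /gen ha; apply/gen; exact: (uasg_scale c ha).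
have WM a b : inW a -> inW b -> inW (a * b).
  by move=> /gen ha /gen hb; apply/gen; exact: (uasg_mul ha hb).
have endo0 eta : ua_endo (W:=W) eta -> eta 0 = 0.
  case=> _ _ _ eZ _; have := eZ 0 0 W0; rewrite /= !scale0r; done.
split.
- move=> [Wv kill].
  have h0 : h 0 = 0 by have := hZ 0 0 W0; rewrite /= !scale0r.
  have hW a : inW a -> inW (h a).
    move=> /gen; elim => {a}.
    + move=> s Ss; case: (pselect (s = u)) => [->|ne]; first by rewrite hu.
      by rewrite hS //; exact: SW.
    + by rewrite h0.
    + by rewrite h1.
    + move=> a b /gen Wa ha /gen Wb hb; rewrite /= hD //; exact: WD.
    + move=> c a /gen Wa ha; rewrite /= hZ //; exact: WZ.
    + move=> a b /gen Wa ha /gen Wb hb; rewrite /= hM //; exact: WM.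
  have hE : ua_endo (W:=W) h by split.
  have D a : inW a -> ua_ideal_gen (W:=W) u (a + (-1) *: h a).
    move=> /gen; elim => {a}.
    + move=> s Ss; case: (pselect (s = u)) => [->|ne].
        by rewrite hu scaler0 addr0; exact: uaig_gen.
      rewrite hS // scaleN1r subrr; exact: uaig_zero.
    + by rewrite h0 scaler0 addr0; exact: uaig_zero.
    + by rewrite h1 scaleN1r subrr; exact: uaig_zero.
    + move=> a b /gen Wa ha /gen Wb hb; rewrite /= hD //.
      have -> : a + b + (-1) *: (h a + h b) = (a + (-1) *: h a) + (b + (-1) *: h b).
        by rewrite !scaleN1r opprD addrACA.
      exact: (uaig_add ha hb).
    + move=> c a /gen Wa ha; rewrite /= hZ //.
      have -> : c *: a + (-1) *: (c *: h a) = c *: (a + (-1) *: h a).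
        by rewrite scalerDr !scalerA mulrC.
      exact: (uaig_scale c ha).
    + move=> a b /gen Wa ha /gen Wb hb; rewrite /= hM //.
      have -> : a * b + (-1) *: (h a * h b) =
                (a + (-1) *: h a) * b + h a * (b + (-1) *: h b).
        rewrite !scaleN1r mulrDl mulrDr mulNr mulrN addrA; congr (_ + _).
        by rewrite addrNK.
      apply: uaig_add; first exact: uaig_mulr.
      apply: uaig_mull => //; exact: hW.
  have := D v Wv; rewrite (kill h hE hu) scaler0 addr0; done.
- elim => {v}.
  + split; first exact: SW.
    by move=> eta _ ->.
  + by split => // eta /endo0.
  + move=> a b _ [Wa ka] _ [Wb kb]; split; first exact: WD.
    move=> eta E e0; have [e1 e2 eD eZ eM] := E.
    by rewrite /= eD //= ka // kb // addr0.
  + move=> c a _ [Wa ka]; split; first exact: WZ.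
    move=> eta E e0; have [e1 e2 eD eZ eM] := E.
    by rewrite /= eZ //= ka // scaler0.
  + move=> w a Ww _ [Wa ka]; split; first exact: WM.
    move=> eta E e0; have [e1 e2 eD eZ eM] := E.
    by rewrite /= eM //= ka // mulr0.
  + move=> a w Ww _ [Wa ka]; split; first exact: WM.
    move=> eta E e0; have [e1 e2 eD eZ eM] := E.
    by rewrite /= eM //= ka // mul0r.
Qed.
End UAgen.
Section LAgen.
Variables (P : fieldType) (V : lmodType P) (br : V -> V -> V) (inW : V -> Prop).
Hypothesis Hbr : is_lie_bracket br.
Local Notation L := (@LieSig P V 0 +%R (fun c p => c *: p) br inW).

Lemma brDl x y z : br (x + y) z = br x z + br y z.
Proof. by case: Hbr => l _ _ _; have := l 1 x y z; rewrite !scale1r. Qed.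
Lemma brDr x y z : br x (y + z) = br x y + br x z.
Proof. by case: Hbr => _ l _ _; have := l 1 x y z; rewrite !scale1r. Qed.
Lemma br0l z : br 0 z = 0.
Proof.
have e := brDl 0 0 z; rewrite addr0 in e.
by apply: (addrI (br 0 z)); rewrite addr0 -e.
Qed.
Lemma br0r z : br z 0 = 0.
Proof.
have e := brDr z 0 0; rewrite addr0 in e.
by apply: (addrI (br z 0)); rewrite addr0 -e.
Qed.
Lemma brZl c x z : br (c *: x) z = c *: br x z.
Proof. by case: Hbr => l _ _ _; have := l c x 0 z; rewrite !addr0 br0l addr0. Qed.
Lemma brZr c x z : br x (c *: z) = c *: br x z.
Proof. by case: Hbr => _ l _ _; have := l c x z 0; rewrite !addr0 br0r addr0. Qed.
Lemma brNr x y : br x (- y) = - br x y.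
Proof. by rewrite -scaleN1r brZr scaleN1r. Qed.
Lemma brN x y : br x y = - br y x.
Proof.
case: Hbr => _ _ alt _; have := alt (x + y).
rewrite brDl !brDr !alt add0r addr0 => /eqP; rewrite addr_eq0 => /eqP.
by [].
Qed.

Lemma la_main (S : V -> Prop) (u : V) :
  (forall s, S s -> inW s) -> (forall a, inW a <-> la_subalg_gen (L:=L) S a) -> S u ->
  (exists h : V -> V, la_hom_to (L:=L) br h /\ h u = 0 /\ forall s, S s -> s <> u -> h s = s) ->
  forall v, (inW v /\ forall eta, la_endo (L:=L) eta -> eta u = 0 -> eta v = 0)
            <-> la_ideal_gen (L:=L) u v.
Proof.
move=> SW gen Su [h [[hD hZ hB] [hu hS]]] v.
have W0 : inW 0 by apply/gen; exact: lasg_zero.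
have WD a b : inW a -> inW b -> inW (a + b).
  by move=> /gen ha /gen hb; apply/gen; exact: (lasg_add ha hb).
have WZ c a : inW a -> inW (c *: a).
  by move=> /gen ha; apply/gen; exact: (lasg_scale c ha).
have WB a b : inW a -> inW b -> inW (br a b).
  by move=> /gen ha /gen hb; apply/gen; exact: (lasg_br ha hb).
have endo0 eta : la_endo (L:=L) eta -> eta 0 = 0.
  case=> _ _ eZ _; have := eZ 0 0 W0; rewrite /= !scale0r; done.
split.
- move=> [Wv kill].
  have h0 : h 0 = 0 by have := hZ 0 0 W0; rewrite /= !scale0r.
  have hW a : inW a -> inW (h a).
    move=> /gen; elim => {a}.
    + move=> s Ss; case: (pselect (s = u)) => [->|ne]; first by rewrite hu.
      by rewrite hS //; exact: SW.
    + by rewrite h0.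
    + move=> a b /gen Wa ha /gen Wb hb; rewrite /= hD //; exact: WD.
    + move=> c a /gen Wa ha; rewrite /= hZ //; exact: WZ.
    + move=> a b /gen Wa ha /gen Wb hb; rewrite /= hB //; exact: WB.
  have hE : la_endo (L:=L) h by split.
  have D a : inW a -> la_ideal_gen (L:=L) u (a + (-1) *: h a).
    move=> /gen; elim => {a}.
    + move=> s Ss; case: (pselect (s = u)) => [->|ne].
        by rewrite hu scaler0 addr0; exact: laig_gen.
      rewrite hS // scaleN1r subrr; exact: laig_zero.
    + by rewrite h0 scaler0 addr0; exact: laig_zero.
    + move=> a b /gen Wa ha /gen Wb hb; rewrite /= hD //.
      have -> : a + b + (-1) *: (h a + h b) = (a + (-1) *: h a) + (b + (-1) *: h b).
        by rewrite !scaleN1r opprD addrACA.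
      exact: (laig_add ha hb).
    + move=> c a /gen Wa ha; rewrite /= hZ //.
      have -> : c *: a + (-1) *: (c *: h a) = c *: (a + (-1) *: h a).
        by rewrite scalerDr !scalerA mulrC.
      exact: (laig_scale c ha).
    + move=> a b /gen Wa ha /gen Wb hb; rewrite /= hB //.
      have -> : br a b + (-1) *: br (h a) (h b) =
                (-1) *: br b (a + (-1) *: h a) + br (h a) (b + (-1) *: h b).
        rewrite !scaleN1r !brDr !brNr [br b a]brN [br b (h a)]brN.
        by rewrite opprD !opprK addrA addrNK.
      apply: laig_add; first by apply: laig_scale; exact: laig_br.
      apply: laig_br => //; exact: hW.
  have := D v Wv; rewrite (kill h hE hu) scaler0 addr0; done.
- elim => {v}.
  + split; first exact: SW.
    by move=> eta _ ->.
  + by split => // eta /endo0.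
  + move=> a b _ [Wa ka] _ [Wb kb]; split; first exact: WD.
    move=> eta E e0; have [e1 eD eZ eB] := E.
    by rewrite /= eD //= ka // kb // addr0.
  + move=> c a _ [Wa ka]; split; first exact: WZ.
    move=> eta E e0; have [e1 eD eZ eB] := E.
    by rewrite /= eZ //= ka // scaler0.
  + move=> w a Ww _ [Wa ka]; split; first exact: WB.
    move=> eta E e0; have [e1 eD eZ eB] := E.
    by rewrite /= eB //= ka // br0r.
Qed.
End LAgen.
Lemma jac6 (V : zmodType) (A B C D E F : V) :
  (A - B - (C - D)) + (C - E - (F - B)) + (F - D - (A - E)) = 0.
Proof.
rewrite !opprB !addrA.
rewrite !addrNK (addrAC _ (- E) B) (addrAC _ (- D) E) addrNK (addrAC _ B (- D)) addrK addrNK subrr.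
by []. Qed.

Section LieNcps.
Variables (P : fieldType) (n : nat).
Local Notation T := (ncps P n).
Lemma ncps_commE (f g : T) : ncps_comm f g = f * g - g * f.
Proof. by change (f * g + (-1) *: (g * f) = f * g - g * f); rewrite scaleN1r. Qed.

Lemma ncps_lie : is_lie_bracket (V := T) (@ncps_comm P n).
Proof.
split.
- move=> c x y z; rewrite !ncps_commE mulrDl mulrDr -scalerAl -scalerAr.
  by rewrite scalerBr opprD addrACA.
- move=> c x y z; rewrite !ncps_commE mulrDl mulrDr -scalerAl -scalerAr.
  by rewrite scalerBr opprD addrACA.
- by move=> x; rewrite ncps_commE subrr.
- move=> x y z; rewrite !ncps_commE !mulrBr !mulrBl !mulrA; exact: jac6.
Qed.
End LieNcps.

Theorem lemma3p1 (P : fieldType) (n : nat) :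
  (* free commutative algebra *)
  (forall u : ua_car (free_comm_alg P n),
     (exists S, ua_base_comm S /\ S u) ->
     forall v, (ua_W (free_comm_alg P n) v /\
                forall eta, ua_endo eta -> eta u = ua_zero (free_comm_alg P n) ->
                            eta v = ua_zero (free_comm_alg P n))
               <-> ua_ideal_gen u v) /\
  (* free associative algebra *)
  (forall u : ua_car (free_assoc_alg P n),
     (exists S, ua_base_assoc S /\ S u) ->
     forall v, (ua_W (free_assoc_alg P n) v /\
                forall eta, ua_endo eta -> eta u = ua_zero (free_assoc_alg P n) ->
                            eta v = ua_zero (free_assoc_alg P n))
               <-> ua_ideal_gen u v) /\
  (* free Lie algebra *)
  (forall u : la_car (free_lie_alg P n),
     (exists S, la_base S /\ S u) ->
     forall v, (la_W (free_lie_alg P n) v /\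
                forall eta, la_endo eta -> eta u = la_zero (free_lie_alg P n) ->
                            eta v = la_zero (free_lie_alg P n))
               <-> la_ideal_gen u v).
Proof.
split; [|split].
- move=> u [S [[SW gen univ] Su]] v.
  have [h [hh hg]] := univ ({mpoly P[n]} : comAlgType P)
                        (fun s => if pselect (s = u) then 0 else s).
  apply: (@ua_main P {mpoly P[n]} (fun _ => True) S u SW gen Su).
  exists h; split => //; split.
  + by rewrite hg //; case: pselect.
  + by move=> s Ss ne; rewrite hg //; case: pselect.
- move=> u [S [[SW gen univ] Su]] v.
  have [h [hh hg]] := univ (ncps P n : algType P)
                        (fun s => if pselect (s = u) then 0 else s).
  apply: (@ua_main P (ncps P n) _ S u SW gen Su).
  exists h; split => //; split.
  + by rewrite hg //; case: pselect.
  + by move=> s Ss ne; rewrite hg //; case: pselect.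
- move=> u [S [[SW gen univ] Su]] v.
  have [h [hh hg]] := univ (ncps P n : lmodType P) (@ncps_comm P n) (@ncps_lie P n)
                        (fun s => if pselect (s = u) then 0 else s).
  apply: (@la_main P (ncps P n) (@ncps_comm P n) _ (@ncps_lie P n) S u SW gen Su).
  exists h; split => //; split.
  + by rewrite hg //; case: pselect.
  + by move=> s Ss ne; rewrite hg //; case: pselect.
Qed.
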